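(* Let $0<p\le1$, $\ell^p=\{\{x_n\}\subset\mathbb R:\sum_{n=1}^\infty|x_n|^p<\infty\}$, and $D(x,y)=\big(\sum_{n=1}^\infty|x_n-y_n|^p\big)^{1/p}$, which is a $b$-metric with coefficient $K=2^{1/p}$. Let $q=\frac{p}{p+1}$, so that $(2K)^q=2$. Then the function $$d(x,y)=\inf\Big\{\sum_{i=1}^n D^{q}(x_i,x_{i+1}): x_1=x,x_2,\dots,x_{n+1}=y\in \ell^p,\ n\in\mathbb N\Big\}$$ equals $\big(\sum_{n=1}^\infty|x_n-y_n|^p\big)^{\frac{1}{p+1}}$ for all $x,y\in\ell^p$, and this is a metric on $\ell^p$. *)

(* Defs.v *)
From Stdlib Require Import Reals List ClassicalEpsilon.
Open Scope R_scope.

(* Real power with the convention 0^a = 0 (for a > 0); only used on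
   nonnegative bases. Stdlib's Rpower 0 a = 1, hence this wrapper. *)
Definition rpow (x a : R) : R :=
  if Rlt_dec 0 x then Rpower x a else 0.

(* Sequences indexed by nat (index 0 plays the role of n = 1). *)
Definition seqR := nat -> R.

(* Value of a convergent series (chosen classically; unspecified otherwise). *)
Definition series (f : nat -> R) : R :=
  epsilon (inhabits 0) (fun l => infinite_sum f l).

Definition lp (p : R) (x : seqR) : Prop :=
  exists l, infinite_sum (fun n => rpow (Rabs (x n)) p) l.

Definition lp_sum (p : R) (x y : seqR) : R :=
  series (fun n => rpow (Rabs (x n - y n)) p).

Definition Dlp (p : R) (x y : seqR) : R := rpow (lp_sum p x y) (1 / p).

Definition Kcoef (p : R) : R := Rpower 2 (1 / p).
Definition qexp (p : R) : R := p / (p + 1).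

(* cost of the chain x = x_1, x_2, ..., x_{n+1} = y with intermediate
   points l = [x_2; ...; x_n]  (n >= 1) *)
Fixpoint chain_cost {X : Type} (c : X -> X -> R) (x : X) (l : list X) (y : X) : R :=
  match l with
  | nil => c x y
  | z :: l' => c x z + chain_cost c z l' y
  end.

Definition is_inf (E : R -> Prop) (m : R) : Prop :=
  (forall r, E r -> m <= r) /\ (forall m', (forall r, E r -> m' <= r) -> m' <= m).

Definition chain_sums (p : R) (x y : seqR) (r : R) : Prop :=
  exists l : list seqR, Forall (lp p) l /\
    r = chain_cost (fun a b => rpow (Dlp p a b) (qexp p)) x l y.

Definition dchain (p : R) (x y : seqR) : R :=
  epsilon (inhabits 0) (is_inf (chain_sums p x y)).

(* Main.v *)
Require Import Defs.
From Stdlib Require Import Reals List ClassicalEpsilon Lra FunctionalExtensionality.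
Open Scope R_scope.

Lemma rpow_nonneg x a : 0 <= rpow x a.
Proof. unfold rpow, Rpower. destruct (Rlt_dec 0 x); [left; apply exp_pos | lra]. Qed.

Lemma rpow_pos x a : 0 < x -> 0 < rpow x a.
Proof. intro H. unfold rpow, Rpower. destruct (Rlt_dec 0 x); [apply exp_pos | lra]. Qed.

Lemma rpow_le0 x a : x <= 0 -> rpow x a = 0.
Proof. intro H. unfold rpow. destruct (Rlt_dec 0 x); lra. Qed.

Lemma rpow_eq0 x a : rpow x a = 0 -> x <= 0.
Proof. intro H. destruct (Rle_or_lt x 0); auto. pose proof (rpow_pos x a H0). lra. Qed.

Lemma rpow_gt x a : 0 < x -> rpow x a = Rpower x a.
Proof. intro H. unfold rpow. destruct (Rlt_dec 0 x); lra. Qed.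

Lemma rpow_rpow x a b : rpow (rpow x a) b = rpow x (a * b).
Proof.
  destruct (Rle_or_lt x 0).
  - rewrite !(rpow_le0 x) by auto. apply rpow_le0; lra.
  - rewrite (rpow_gt x a H), rpow_gt, rpow_gt by (auto; unfold Rpower; apply exp_pos).
    apply Rpower_mult.
Qed.

Lemma rpow_mono a x y : 0 < a -> 0 <= x <= y -> rpow x a <= rpow y a.
Proof.
  intros Ha [H1 H2]. destruct H1 as [H1|H1].
  - rewrite !rpow_gt by lra. apply Rle_Rpower_l; lra.
  - subst. rewrite rpow_le0 by lra. apply rpow_nonneg.
Qed.

Lemma exp_le a b : a <= b -> exp a <= exp b.
Proof. intros [H|H]; [left; apply exp_increasing; auto | subst; lra]. Qed.

Lemma Rpower_ge t a : 0 < t <= 1 -> 0 < a <= 1 -> t <= Rpower t a.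
Proof.
  intros [Ht1 Ht2] [Ha1 Ha2].
  assert (Hl : ln t <= 0).
  { destruct Ht2 as [Ht2|Ht2]. - rewrite <- ln_1. left. apply ln_increasing; lra.
    - subst. rewrite ln_1. lra. }
  unfold Rpower. rewrite <- (exp_ln t) at 1 by lra. apply exp_le. nra.
Qed.

Lemma rpow_subadd a x y : 0 < a <= 1 -> 0 <= x -> 0 <= y ->
  rpow (x + y) a <= rpow x a + rpow y a.
Proof.
  intros Ha Hx Hy.
  destruct Hx as [Hx|Hx]; [| subst; rewrite Rplus_0_l, (rpow_le0 0) by lra; lra].
  destruct Hy as [Hy|Hy]; [| subst; rewrite Rplus_0_r, (rpow_le0 0) by lra; lra].
  rewrite !rpow_gt by lra.
  set (s := x + y).
  assert (Hs : 0 < s) by (unfold s; lra).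
  assert (Ex : x = s * (x / s)) by (field; lra).
  assert (Ey : y = s * (y / s)) by (field; lra).
  assert (H1 : x / s <= Rpower (x / s) a).
  { apply Rpower_ge; auto. split. apply Rdiv_lt_0_compat; lra.
    apply (Rmult_le_reg_r s); auto. unfold Rdiv. rewrite Rmult_assoc, Rinv_l by lra. unfold s; lra. }
  assert (H2 : y / s <= Rpower (y / s) a).
  { apply Rpower_ge; auto. split. apply Rdiv_lt_0_compat; lra.
    apply (Rmult_le_reg_r s); auto. unfold Rdiv. rewrite Rmult_assoc, Rinv_l by lra. unfold s; lra. }
  replace (Rpower x a) with (Rpower (s * (x / s)) a) by (rewrite <- Ex; auto).
  replace (Rpower y a) with (Rpower (s * (y / s)) a) by (rewrite <- Ey; auto).
  rewrite <- !Rpower_mult_distr by (auto; apply Rdiv_lt_0_compat; lra).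
  assert (Hp : 0 < Rpower s a) by (unfold Rpower; apply exp_pos).
  assert (Hsum : x / s + y / s = 1) by (unfold s; field; lra).
  nra.
Qed.

Definition summable (f : nat -> R) := exists l, infinite_sum f l.

Lemma series_spec f : summable f -> infinite_sum f (series f).
Proof. intro H. unfold series. apply epsilon_spec. exact H. Qed.

Lemma summable_comp f g h : (forall n, 0 <= f n <= g n + h n) ->
  summable g -> summable h -> summable f.
Proof.
  intros H [lg Hg] [lh Hh].
  assert (Hc : {l | Un_cv (fun N => sum_f_R0 (fun n => g n + h n) N) l}).
  { exists (lg + lh). intros eps He.
    assert (Hp := CV_plus _ _ _ _ Hg Hh eps He). destruct Hp as [N HN]. exists N.
    intros n Hn. rewrite sum_plus. apply HN; auto. }
  destruct (Rseries_CV_comp f _ H Hc) as [l Hl]. exists l. exact Hl.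
Qed.

Lemma series_le f g h : (forall n, f n <= g n + h n) ->
  summable f -> summable g -> summable h -> series f <= series g + series h.
Proof.
  intros H Hf Hg Hh. apply series_spec in Hf, Hg, Hh.
  apply (Rle_cv_lim (Un:=sum_f_R0 f) (Vn:=fun N => sum_f_R0 g N + sum_f_R0 h N)).
  - intro n. rewrite <- sum_plus. apply sum_Rle. intros; apply H.
  - exact Hf.
  - apply CV_plus; auto.
Qed.

Lemma series_nonneg_term f : (forall n, 0 <= f n) -> summable f ->
  forall k, f k <= series f.
Proof.
  intros H Hf k. apply series_spec in Hf.
  apply Rle_trans with (sum_f_R0 f k).
  - destruct k; simpl. lra. pose proof (cond_pos_sum f k H). lra.
  - apply growing_ineq; auto. intro n. simpl. specialize (H (S n)). lra.
Qed.

Lemma series_nonneg f : (forall n, 0 <= f n) -> summable f -> 0 <= series f.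
Proof. intros H Hf. apply Rle_trans with (f 0%nat); auto. apply series_nonneg_term; auto. Qed.

Lemma series_zero : series (fun _ => 0) = 0.
Proof.
  apply (uniqueness_sum (fun _ => 0)). apply series_spec. exists 0.
  all: intros eps He; exists 0%nat; intros n _; rewrite sum_cte; unfold Rdist;
    rewrite Rmult_0_l, Rminus_0_r, Rabs_R0; lra.
Qed.

Section Main.
Variable p : R.
Hypothesis hp0 : 0 < p.
Hypothesis hp1 : p <= 1.

Lemma term_tri a b c : rpow (Rabs (a - c)) p <= rpow (Rabs (a - b)) p + rpow (Rabs (b - c)) p.
Proof.
  apply Rle_trans with (rpow (Rabs (a - b) + Rabs (b - c)) p).
  - apply rpow_mono; auto. split. apply Rabs_pos.
    replace (a - c) with ((a - b) + (b - c)) by ring. apply Rabs_triang.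
  - apply rpow_subadd; auto; apply Rabs_pos.
Qed.

Lemma lp_summable x y : lp p x -> lp p y -> summable (fun n => rpow (Rabs (x n - y n)) p).
Proof.
  intros Hx Hy. apply (summable_comp _ (fun n => rpow (Rabs (x n)) p) (fun n => rpow (Rabs (y n)) p)); auto.
  intro n. split. apply rpow_nonneg.
  pose proof (term_tri (x n) 0 (y n)). rewrite Rminus_0_r, Rminus_0_l, Rabs_Ropp in H. exact H.
Qed.

Lemma S_nonneg x y : lp p x -> lp p y -> 0 <= lp_sum p x y.
Proof. intros. apply series_nonneg. intro; apply rpow_nonneg. apply lp_summable; auto. Qed.

Lemma S_tri x y z : lp p x -> lp p y -> lp p z -> lp_sum p x z <= lp_sum p x y + lp_sum p y z.
Proof. intros. apply series_le; try apply lp_summable; auto. intro; apply term_tri. Qed.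

Lemma S_sym x y : lp_sum p x y = lp_sum p y x.
Proof. unfold lp_sum. f_equal. extensionality n. rewrite Rabs_minus_sym. auto. Qed.

Definition al := 1 / (p + 1).
Lemma al_bounds : 0 < al <= 1.
Proof. unfold al. split. apply Rdiv_lt_0_compat; lra.
  apply (Rmult_le_reg_r (p+1)); [lra|]. unfold Rdiv. rewrite Rmult_assoc, Rinv_l by lra. lra. Qed.

Definition ds x y := rpow (lp_sum p x y) al.

Lemma ds_tri x y z : lp p x -> lp p y -> lp p z -> ds x z <= ds x y + ds y z.
Proof.
  intros. unfold ds. pose proof al_bounds.
  apply Rle_trans with (rpow (lp_sum p x y + lp_sum p y z) al).
  - apply rpow_mono. lra. split. apply S_nonneg; auto. apply S_tri; auto.
  - apply rpow_subadd; auto; apply S_nonneg; auto.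
Qed.

Lemma cost_eq a b : rpow (Dlp p a b) (qexp p) = ds a b.
Proof. unfold Dlp, ds. rewrite rpow_rpow. f_equal. unfold al, qexp. field. lra. Qed.

Lemma chain_lb x y l : lp p x -> lp p y -> Forall (lp p) l ->
  ds x y <= chain_cost (fun a b => rpow (Dlp p a b) (qexp p)) x l y.
Proof.
  revert x. induction l as [|z l IH]; intros x Hx Hy Hl; simpl.
  - rewrite cost_eq. lra.
  - inversion Hl; subst. rewrite cost_eq.
    apply Rle_trans with (ds x z + ds z y). apply ds_tri; auto.
    specialize (IH z H1 Hy H2). lra.
Qed.

Lemma dchain_eq x y : lp p x -> lp p y -> dchain p x y = ds x y.
Proof.
  intros Hx Hy.
  assert (Hi : is_inf (chain_sums p x y) (ds x y)).
  { split.
    - intros r [l [Hl ->]]. apply chain_lb; auto.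
    - intros m' Hm. apply Hm. exists nil. split. constructor. simpl. rewrite cost_eq. auto. }
  assert (He : is_inf (chain_sums p x y) (dchain p x y)).
  { unfold dchain. apply epsilon_spec. exists (ds x y). auto. }
  destruct Hi as [A B]. destruct He as [C D]. apply Rle_antisym.
  - apply C. exists nil. split. constructor. simpl. rewrite cost_eq. auto.
  - apply D. auto.
Qed.

End Main.

Theorem mainTheorem12 (p : R) (hp0 : 0 < p) (hp1 : p <= 1) :
  Rpower (2 * Kcoef p) (qexp p) = 2 /\
  (forall x y : seqR, lp p x -> lp p y ->
     dchain p x y = rpow (lp_sum p x y) (1 / (p + 1))) /\
  (forall x y : seqR, lp p x -> lp p y -> 0 <= dchain p x y) /\
  (forall x y : seqR, lp p x -> lp p y -> (dchain p x y = 0 <-> x = y)) /\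
  (forall x y : seqR, lp p x -> lp p y -> dchain p x y = dchain p y x) /\
  (forall x y z : seqR, lp p x -> lp p y -> lp p z ->
     dchain p x z <= dchain p x y + dchain p y z).
Proof.
  split.
  { unfold Kcoef, qexp. rewrite <- (Rpower_1 2) at 1 by lra.
    rewrite <- Rpower_plus, Rpower_mult.
    replace ((1 + 1 / p) * (p / (p + 1))) with 1 by (field; lra). apply Rpower_1; lra. }
  split.
  { intros. rewrite dchain_eq; auto. }
  split.
  { intros. rewrite dchain_eq; auto. apply rpow_nonneg. }
  split.
  { intros x y Hx Hy. rewrite dchain_eq; auto. unfold ds. split.
    - intro H. apply rpow_eq0 in H.
      assert (H0 : lp_sum p x y = 0) by (pose proof (S_nonneg p hp0 hp1 x y Hx Hy); lra).
      extensionality n.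
      assert (Ht := series_nonneg_term (fun n => rpow (Rabs (x n - y n)) p)
                      (fun n => rpow_nonneg _ _) (lp_summable p hp0 hp1 x y Hx Hy) n).
      fold (lp_sum p x y) in Ht. rewrite H0 in Ht.
      assert (Hz : rpow (Rabs (x n - y n)) p = 0) by (pose proof (rpow_nonneg (Rabs (x n - y n)) p); lra).
      apply rpow_eq0 in Hz. pose proof (Rabs_pos (x n - y n)).
      assert (Rabs (x n - y n) = 0) by lra.
      destruct (Req_dec (x n - y n) 0). lra. apply Rabs_no_R0 in H3. contradiction.
    - intros ->. unfold lp_sum.
      replace (fun n => rpow (Rabs (y n - y n)) p) with (fun _ : nat => 0).
      rewrite series_zero. apply rpow_le0; lra.
      extensionality n. rewrite Rminus_diag_eq, Rabs_R0 by auto. symmetry. apply rpow_le0; lra. }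
  split.
  { intros. rewrite !dchain_eq; auto. unfold ds. rewrite S_sym. auto. }
  { intros. rewrite !dchain_eq; auto. apply ds_tri; auto. }
Qed.
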